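(* Let $p$ be an odd prime, $n=2k$, and $\mathcal{S}=\{y\in\mathbb{F}_{p^n}: T^n_k(y)=0\}$. Let $L(x)=\sum_{j=0}^{n-1}c_jx^{p^j}$ with all $c_j\in\mathbb{F}_{p^k}$ be a linearized polynomial that permutes $\mathbb{F}_{p^n}$, let $\delta\in\mathcal{S}$, and let $s\in\{2,4,\dots,p^n-1\}$ be even. Then the mapping $$G(x)=-L(x)+(x+\delta)^s-(x+\delta)^{p^ks}$$ permutes $\mathcal{S}$, and consequently $$F(x)=L(x)+(x^{p^k}-x+\delta)^s$$ is a permutation of $\mathbb{F}_{p^n}$.
   Context: $T^n_k(\beta)=\beta+\beta^{p^k}$ for $n=2k$ is the relative trace from $\mathbb{F}_{p^n}$ to $\mathbb{F}_{p^k}$. *)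

(* Defs.v *)
From mathcomp Require Import all_boot all_algebra all_field.
Set Implicit Arguments. Unset Strict Implicit. Unset Printing Implicit Defensive.
Import GRing.Theory.
Local Open Scope ring_scope.

(* Relative trace T^n_k(b) = b + b^(p^k) from F_{p^n} to F_{p^k}, n = 2k. *)
Definition rel_trace (K : finFieldType) (p k : nat) (b : K) : K :=
  b + b ^+ (p ^ k).

Definition in_subfield (K : finFieldType) (p k : nat) (c : K) : bool :=
  c ^+ (p ^ k) == c.

Definition linearized (K : finFieldType) (p n : nat) (c : nat -> K) (x : K) : K :=
  \sum_(j < n) c j * x ^+ (p ^ j).

(* f permutes the subset S: maps S into S and is injective on S
   (equivalently bijective on S, S finite). *)
Definition permutes_on (K : finFieldType) (S : pred K) (f : K -> K) : Prop :=
  (forall x, S x -> S (f x)) /\ {in S &, injective f}.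

(* Main.v *)
Require Import Defs.
From mathcomp Require Import all_boot all_algebra all_field.
From mathcomp Require Import ring.
Import GRing.Theory.
Local Open Scope ring_scope.

Lemma cn (K : finFieldType) p j : prime p -> p \in [pchar K] -> [pchar K].-nat (p ^ j)%N.
Proof. move=> pp hc. by rewrite pnatX (pnatE _ pp) hc. Qed.

Theorem proposition6 (K : finFieldType) (p k : nat)
  (hp : prime p) (hodd : odd p) (hchar : p \in [pchar K])
  (hk : (0 < k)%N) (hcard : #|K| = (p ^ (2 * k))%N)
  (c : nat -> K) (hc : forall j, (j < 2 * k)%N -> in_subfield p k (c j))
  (hL : bijective (linearized p (2 * k) c))
  (delta : K) (hdelta : rel_trace p k delta = 0)
  (s : nat) (hs_even : ~~ odd s) (hs_pos : (2 <= s)%N)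
  (hs_le : (s <= p ^ (2 * k) - 1)%N) :
  permutes_on (fun y : K => rel_trace p k y == 0)
    (fun x => - linearized p (2 * k) c x + (x + delta) ^+ s
              - (x + delta) ^+ (p ^ k * s))
  /\ bijective (fun x : K => linearized p (2 * k) c x
                  + (x ^+ (p ^ k) - x + delta) ^+ s).
Proof.
set q := (p ^ k)%N.
set L := linearized p (2 * k) c.
move: hdelta; rewrite /rel_trace -/q => hdelta.
have fDj j (x y : K) : (x + y) ^+ (p ^ j) = x ^+ (p ^ j) + y ^+ (p ^ j).
  by rewrite exprDn_pchar // cn.
have fNj j (x : K) : (- x) ^+ (p ^ j) = - x ^+ (p ^ j).
  by rewrite exprNn_pchar // cn.
have fD (x y : K) : (x + y) ^+ q = x ^+ q + y ^+ q by exact: fDj.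
have fN (x : K) : (- x) ^+ q = - x ^+ q by exact: fNj.
have ff (x : K) : x ^+ q ^+ q = x.
  by rewrite -exprM -expnD addnn -mul2n -hcard expf_card.
have q0 : (0 < q)%N by rewrite expn_gt0 prime_gt0.
have LD x y : L (x + y) = L x + L y.
  rewrite /L /linearized -big_split /=; apply: eq_bigr => j _.
  by rewrite fDj mulrDr.
have L0 : L 0 = 0 by rewrite /L /linearized big1 // => j _; rewrite expr0n expn_eq0 eqn0Ngt prime_gt0 //= mulr0.
have LN x : L (- x) = - L x.
  by apply/eqP; rewrite -subr_eq0 opprK addrC -LD addrN L0.
have LB x y : L (x - y) = L x - L y by rewrite LD LN.
have Lq x : (L x) ^+ q = L (x ^+ q).
  have f0 : (0 : K) ^+ q = 0 by rewrite expr0n eqn0Ngt q0.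
  rewrite /L /linearized (big_morph (fun x : K => x ^+ q) fD f0).
  apply: eq_bigr => j _.
  by rewrite exprMn (eqP (hc j (ltn_ord j))) -!exprM (mulnC (p ^ j)%N).
have Linj := bij_inj hL.
have evn (u : K) : (- u) ^+ s = u ^+ s.
  by rewrite -(odd_double_half s) (negbTE hs_even) add0n -mul2n exprM sqrrN -exprM.
have Sq (u : K) : u + u ^+ q = 0 -> u ^+ q = - u.
  by move=> h; apply/eqP; rewrite -subr_eq0 opprK addrC h.
split.
  have G x : rel_trace p k x = 0 -> - L x + (x + delta) ^+ s - (x + delta) ^+ (q * s) = - L x.
    move=> hx; rewrite /rel_trace -/q in hx; rewrite exprM Sq ?evn ?addrK //.
    by rewrite fD addrACA hx hdelta addr0.
  split.
    move=> x /eqP hx; rewrite G //; apply/eqP.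
    rewrite /rel_trace -/q in hx *.
    by rewrite fN Lq -opprD -LD hx L0 oppr0.
  move=> x y hx hy /=; rewrite !G; first by move=> /oppr_inj; exact: Linj.
  - by move: hy => h; rewrite /rel_trace; apply/eqP; exact: h.
  - by move: hx => h; rewrite /rel_trace; apply/eqP; exact: h.
apply: injF_bij => x y /= h.
have W z : ((z ^+ q - z + delta) ^+ s) ^+ q = (z ^+ q - z + delta) ^+ s.
  rewrite -exprM mulnC exprM fD fD fN ff (Sq delta hdelta).
  by rewrite -[RHS]evn; congr (_ ^+ _); ring.
have hphi z : (L z + (z ^+ q - z + delta) ^+ s) ^+ q - (L z + (z ^+ q - z + delta) ^+ s)
              = L (z ^+ q - z).
  by rewrite fD W Lq LB opprD addrACA addrN addr0.
have e1 : x ^+ q - x = y ^+ q - y by apply: Linj; rewrite -/L -!hphi h.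
by apply: Linj; rewrite -/L; apply: (addIr ((x ^+ q - x + delta) ^+ s)); rewrite h e1.
Qed.
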